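(* Let $(\mathsf{T}, \mu, \eta, \mathsf{n}, \mathsf{n}_{K})$ be a symmetric comonoidal monad and $(!, \delta, \varepsilon, \Delta, \mathsf{e}, \mathsf{m},\mathsf{m}_K)$ be a monoidal coalgebra modality on the same symmetric monoidal category $(\mathbb{X}, \otimes, K)$. Then the following are in bijective correspondence: (1) Symmetric monoidal mixed distributive laws of $(\mathsf{T}, \mu, \eta, \mathsf{n}, \mathsf{n}_{K})$ over $(!, \delta, \varepsilon, \mathsf{m},\mathsf{m}_K)$; (2) Liftings of the monoidal coalgebra modality to $(\mathbb{X}^\mathsf{T}, \otimes^{\mathsf{n}}, (K,\mathsf{n}_K))$, that is, monoidal coalgebra modalities $(\tilde{!}, \tilde{\delta}, \tilde{\varepsilon}, \tilde{\Delta}, \tilde{\mathsf{e}}, \tilde{\mathsf{m}}, \tilde{\mathsf{m}}_{(K, \mathsf{n}_K)})$ on $(\mathbb{X}^\mathsf{T}, \otimes^{\mathsf{n}}, (K,\mathsf{n}_K))$ with $\mathsf{U}^\mathsf{T}\tilde{!}=!\,\mathsf{U}^\mathsf{T}$ whose structure maps are mapped by the forgetful functor $\mathsf{U}^\mathsf{T}$ to $\delta_A,\varepsilon_A,\Delta_A,\mathsf{e}_A,\mathsf{m}_{A,B},\mathsf{m}_K$ respectively; (3) Liftings of the symmetric comonoidal monad $(\mathsf{T}, \mu, \eta, \mathsf{n}, \mathsf{n}_{K})$ to $(\mathbb{X}^!, \otimes^\mathsf{m}, (K, \mathsf{m}_K))$, that is, symmetric comonoidal monads on $\mathbb{X}^!$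 with underlying functor commuting with the forgetful functor $\mathsf{U}^!$ and whose structure maps are mapped by $\mathsf{U}^!$ to $\mu_A,\eta_A,\mathsf{n}_{A,B},\mathsf{n}_K$.
   Context: Composition is in diagrammatic order; $\tau$ is the canonical interchange $(A\otimes B)\otimes(C\otimes D)\to(A\otimes C)\otimes(B\otimes D)$. A symmetric comonoidal monad $(\mathsf{T},\mu,\eta,\mathsf{n},\mathsf{n}_K)$ is a monad with symmetric oplax monoidal structure $\mathsf{n}_{A,B}:\mathsf{T}(A\otimes B)\to\mathsf{T}(A)\otimes\mathsf{T}(B)$, $\mathsf{n}_K:\mathsf{T}(K)\to K$ compatible with $\mu,\eta$; $\mathbb{X}^\mathsf{T}$ is symmetric monoidal via $(A,\nu)\otimes^\mathsf{n}(B,\nu')=(A\otimes B,\mathsf{n}_{A,B};(\nu\otimes\nu'))$, unit $(K,\mathsf{n}_K)$. A monoidal coalgebra modality $(!,\delta,\varepsilon,\Delta,\mathsf{e},\mathsf{m},\mathsf{m}_K)$ is a symmetric monoidal comonad $(!,\delta,\varepsilon,\mathsf{m},\mathsf{m}_K)$ (lax monoidal $\mathsf{m}_{A,B}:!(A)\otimes!(B)\to!(A\otimes B)$, $\mathsf{m}_K:K\to!(K)$ with $\delta,\varepsilon$ monoidal) which is also a coalgebra modality (natural cocommutative comonoids $(!(A),\Delta_A,\mathsf{e}_A)$ with $\delta_A$ a comonoid morphism) such that $\Delta$, $\mathsf{e}$ are monoidal transformations, i.e. $\mathsf{m}_{A,B};\Delta_{A\otimes B}=(\Delta_A\otimes\Delta_B);\tau;(\mathsf{m}_{A,B}\otimes\mathsf{m}_{A,B})$,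 $\mathsf{m}_{A,B};\mathsf{e}_{A\otimes B}=(\mathsf{e}_A\otimes\mathsf{e}_B);\ell_K$, $\mathsf{m}_K;\Delta_K=\ell^{-1}_K;(\mathsf{m}_K\otimes\mathsf{m}_K)$, $\mathsf{m}_K;\mathsf{e}_K=1_K$, and are coalgebra morphisms: $\delta_A;!(\Delta_A)=\Delta_A;(\delta_A\otimes\delta_A);\mathsf{m}_{!(A),!(A)}$, $\delta_A;!(\mathsf{e}_A)=\mathsf{e}_A;\mathsf{m}_K$. $\mathbb{X}^!$ is the category of $!$-coalgebras with $(A,\omega)\otimes^\mathsf{m}(B,\omega')=(A\otimes B,(\omega\otimes\omega');\mathsf{m}_{A,B})$, unit $(K,\mathsf{m}_K)$. A symmetric monoidal mixed distributive law is a natural $\lambda_A:\mathsf{T}!(A)\to!\mathsf{T}(A)$ with $\mu_{!(A)};\lambda_A=\mathsf{T}(\lambda_A);\lambda_{\mathsf{T}(A)};!(\mu_A)$, $\eta_{!(A)};\lambda_A=!(\eta_A)$, $\mathsf{T}(\delta_A);\lambda_{!(A)};!(\lambda_A)=\lambda_A;\delta_{\mathsf{T}(A)}$, $\lambda_A;\varepsilon_{\mathsf{T}(A)}=\mathsf{T}(\varepsilon_A)$, $\mathsf{n}_{!(A),!(B)};(\lambda_A\otimes\lambda_B);\mathsf{m}_{\mathsf{T}(A),\mathsf{T}(B)}=\mathsf{T}(\mathsf{m}_{A,B});\lambda_{A\otimes B};!(\mathsf{n}_{A,B})$, $\mathsf{n}_K;\mathsf{m}_K=\mathsf{T}(\mathsf{m}_K);\lambda_K;!(\mathsf{n}_K)$.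 *)

(* Defs.v *)
(* Composition is written in DIAGRAMMATIC order:  f ;; g  = "first f, then g".
   Equality of morphisms is Leibniz equality in the hom-types. *)


Record Cat : Type := MkCat {
  ob :> Type;
  hom : ob -> ob -> Type;
  idm : forall A : ob, hom A A;
  comp : forall A B D : ob, hom A B -> hom B D -> hom A D
}.
Arguments hom {c} _ _.
Arguments idm {c} A.
Arguments comp {c A B D} _ _.

Notation "f ;; g" := (comp f g) (at level 50, left associativity).

Class IsCat (C : Cat) : Prop := {
  comp_id_l : forall (A B : C) (f : hom A B), idm A ;; f = f;
  comp_id_r : forall (A B : C) (f : hom A B), f ;; idm B = f;
  comp_assoc : forall (A B D E : C) (f : hom A B) (g : hom B D) (h : hom D E),
      (f ;; g) ;; h = f ;; (g ;; h)
}.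

Class MonData (C : Cat) : Type := {
  ten : C -> C -> C;
  tenm : forall A B A' B' : C, hom A A' -> hom B B' -> hom (ten A B) (ten A' B');
  unitK : C;
  alpha : forall A B D : C, hom (ten (ten A B) D) (ten A (ten B D));
  alphai : forall A B D : C, hom (ten A (ten B D)) (ten (ten A B) D);
  lam : forall A : C, hom (ten unitK A) A;
  lami : forall A : C, hom A (ten unitK A);
  rho : forall A : C, hom (ten A unitK) A;
  rhoi : forall A : C, hom A (ten A unitK);
  sig : forall A B : C, hom (ten A B) (ten B A)
}.
Arguments ten {C MonData} _ _.
Arguments tenm {C MonData A B A' B'} _ _.
Arguments unitK {C MonData}.
Arguments alpha {C MonData} A B D.
Arguments alphai {C MonData} A B D.
Arguments lam {C MonData} A.
Arguments lami {C MonData} A.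
Arguments rho {C MonData} A.
Arguments rhoi {C MonData} A.
Arguments sig {C MonData} A B.

Notation "A ⊗ B" := (ten A B) (at level 40, left associativity).
Notation "f ⊗m g" := (tenm f g) (at level 40, left associativity).

Class IsSMC (C : Cat) (M : MonData C) : Prop := {
  tenm_id : forall A B : C, idm A ⊗m idm B = idm (A ⊗ B);
  tenm_comp : forall (A1 A2 A3 B1 B2 B3 : C) (f : hom A1 A2) (f' : hom A2 A3)
      (g : hom B1 B2) (g' : hom B2 B3),
      (f ;; f') ⊗m (g ;; g') = (f ⊗m g) ;; (f' ⊗m g');
  alpha_nat : forall (A A' B B' D D' : C) (f : hom A A') (g : hom B B') (h : hom D D'),
      ((f ⊗m g) ⊗m h) ;; alpha A' B' D' = alpha A B D ;; (f ⊗m (g ⊗m h));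
  alpha_iso1 : forall A B D : C, alpha A B D ;; alphai A B D = idm _;
  alpha_iso2 : forall A B D : C, alphai A B D ;; alpha A B D = idm _;
  lam_nat : forall (A A' : C) (f : hom A A'), (idm unitK ⊗m f) ;; lam A' = lam A ;; f;
  lam_iso1 : forall A : C, lam A ;; lami A = idm _;
  lam_iso2 : forall A : C, lami A ;; lam A = idm _;
  rho_nat : forall (A A' : C) (f : hom A A'), (f ⊗m idm unitK) ;; rho A' = rho A ;; f;
  rho_iso1 : forall A : C, rho A ;; rhoi A = idm _;
  rho_iso2 : forall A : C, rhoi A ;; rho A = idm _;
  sig_nat : forall (A A' B B' : C) (f : hom A A') (g : hom B B'),
      (f ⊗m g) ;; sig A' B' = sig A B ;; (g ⊗m f);
  sig_inv : forall A B : C, sig A B ;; sig B A = idm _;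
  pentagon : forall A B D E : C,
      (alpha A B D ⊗m idm E) ;; alpha A (B ⊗ D) E ;; (idm A ⊗m alpha B D E)
      = alpha (A ⊗ B) D E ;; alpha A B (D ⊗ E);
  triangle : forall A B : C,
      alpha A unitK B ;; (idm A ⊗m lam B) = rho A ⊗m idm B;
  hexagon : forall A B D : C,
      alpha A B D ;; sig A (B ⊗ D) ;; alpha B D A
      = (sig A B ⊗m idm D) ;; alpha B A D ;; (idm B ⊗m sig A D)
}.

Definition tau {C : Cat} {M : MonData C} (A B D E : C)
  : hom ((A ⊗ B) ⊗ (D ⊗ E)) ((A ⊗ D) ⊗ (B ⊗ E)) :=
  alpha A B (D ⊗ E) ;; (idm A ⊗m alphai B D E) ;; (idm A ⊗m (sig B D ⊗m idm E))
  ;; (idm A ⊗m alpha D B E) ;; alphai A D (B ⊗ E).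

Record Functor (C : Cat) : Type := MkFunctor {
  fo : C -> C;
  fm : forall A B : C, hom A B -> hom (fo A) (fo B)
}.
Arguments fo {C} _ _.
Arguments fm {C} _ {A B} _.

Definition IsFunctor {C : Cat} (F : Functor C) : Prop :=
  (forall A : C, fm F (idm A) = idm (fo F A)) /\
  (forall (A B D : C) (f : hom A B) (g : hom B D), fm F (f ;; g) = fm F f ;; fm F g).

Record CMonad (C : Cat) (M : MonData C) : Type := MkCMonad {
  cT : Functor C;
  cmu : forall A : C, hom (fo cT (fo cT A)) (fo cT A);
  ceta : forall A : C, hom A (fo cT A);
  cn : forall A B : C, hom (fo cT (A ⊗ B)) (fo cT A ⊗ fo cT B);
  cnK : hom (fo cT unitK) unitK
}.
Arguments cT {C M} _.
Arguments cmu {C M} _ A.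
Arguments ceta {C M} _ A.
Arguments cn {C M} _ A B.
Arguments cnK {C M} _.

Class IsSymComonoidalMonad (C : Cat) (M : MonData C) (T : CMonad C M) : Prop := {
  scm_functor : IsFunctor (cT T);
  mu_nat : forall (A B : C) (f : hom A B),
      fm (cT T) (fm (cT T) f) ;; cmu T B = cmu T A ;; fm (cT T) f;
  eta_nat : forall (A B : C) (f : hom A B), f ;; ceta T B = ceta T A ;; fm (cT T) f;
  mu_assoc : forall A : C, fm (cT T) (cmu T A) ;; cmu T A = cmu T (fo (cT T) A) ;; cmu T A;
  mu_eta_l : forall A : C, ceta T (fo (cT T) A) ;; cmu T A = idm _;
  mu_eta_r : forall A : C, fm (cT T) (ceta T A) ;; cmu T A = idm _;
  n_nat : forall (A A' B B' : C) (f : hom A A') (g : hom B B'),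
      fm (cT T) (f ⊗m g) ;; cn T A' B' = cn T A B ;; (fm (cT T) f ⊗m fm (cT T) g);
  n_assoc : forall A B D : C,
      fm (cT T) (alpha A B D) ;; cn T A (B ⊗ D) ;; (idm _ ⊗m cn T B D)
      = cn T (A ⊗ B) D ;; (cn T A B ⊗m idm _) ;; alpha _ _ _;
  n_unit_l : forall A : C,
      cn T unitK A ;; (cnK T ⊗m idm _) ;; lam _ = fm (cT T) (lam A);
  n_unit_r : forall A : C,
      cn T A unitK ;; (idm _ ⊗m cnK T) ;; rho _ = fm (cT T) (rho A);
  n_sym : forall A B : C, fm (cT T) (sig A B) ;; cn T B A = cn T A B ;; sig _ _;
  mu_n : forall A B : C,
      cmu T (A ⊗ B) ;; cn T A B
      = fm (cT T) (cn T A B) ;; cn T _ _ ;; (cmu T A ⊗m cmu T B);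
  mu_nK : cmu T unitK ;; cnK T = fm (cT T) (cnK T) ;; cnK T;
  eta_n : forall A B : C, ceta T (A ⊗ B) ;; cn T A B = ceta T A ⊗m ceta T B;
  eta_nK : ceta T unitK ;; cnK T = idm unitK
}.

Record MCM (C : Cat) (M : MonData C) : Type := MkMCM {
  bang : Functor C;
  del : forall A : C, hom (fo bang A) (fo bang (fo bang A));
  eps : forall A : C, hom (fo bang A) A;
  dup : forall A : C, hom (fo bang A) (fo bang A ⊗ fo bang A);
  er : forall A : C, hom (fo bang A) unitK;
  mm : forall A B : C, hom (fo bang A ⊗ fo bang B) (fo bang (A ⊗ B));
  mK : hom unitK (fo bang unitK)
}.
Arguments bang {C M} _.
Arguments del {C M} _ A.
Arguments eps {C M} _ A.
Arguments dup {C M} _ A.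
Arguments er {C M} _ A.
Arguments mm {C M} _ A B.
Arguments mK {C M} _.

Class IsMCM (C : Cat) (M : MonData C) (Bg : MCM C M) : Prop := {
  mcm_functor : IsFunctor (bang Bg);
  del_nat : forall (A B : C) (f : hom A B),
      fm (bang Bg) f ;; del Bg B = del Bg A ;; fm (bang Bg) (fm (bang Bg) f);
  eps_nat : forall (A B : C) (f : hom A B), fm (bang Bg) f ;; eps Bg B = eps Bg A ;; f;
  del_coassoc : forall A : C,
      del Bg A ;; del Bg (fo (bang Bg) A) = del Bg A ;; fm (bang Bg) (del Bg A);
  del_eps_l : forall A : C, del Bg A ;; eps Bg (fo (bang Bg) A) = idm _;
  del_eps_r : forall A : C, del Bg A ;; fm (bang Bg) (eps Bg A) = idm _;
  m_nat : forall (A A' B B' : C) (f : hom A A') (g : hom B B'),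
      (fm (bang Bg) f ⊗m fm (bang Bg) g) ;; mm Bg A' B' = mm Bg A B ;; fm (bang Bg) (f ⊗m g);
  m_assoc : forall A B D : C,
      (mm Bg A B ⊗m idm _) ;; mm Bg (A ⊗ B) D ;; fm (bang Bg) (alpha A B D)
      = alpha _ _ _ ;; (idm _ ⊗m mm Bg B D) ;; mm Bg A (B ⊗ D);
  m_unit_l : forall A : C,
      (mK Bg ⊗m idm _) ;; mm Bg unitK A ;; fm (bang Bg) (lam A) = lam _;
  m_unit_r : forall A : C,
      (idm _ ⊗m mK Bg) ;; mm Bg A unitK ;; fm (bang Bg) (rho A) = rho _;
  m_sym : forall A B : C, mm Bg A B ;; fm (bang Bg) (sig A B) = sig _ _ ;; mm Bg B A;
  m_del : forall A B : C,
      mm Bg A B ;; del Bg (A ⊗ B)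
      = (del Bg A ⊗m del Bg B) ;; mm Bg _ _ ;; fm (bang Bg) (mm Bg A B);
  mK_del : mK Bg ;; del Bg unitK = mK Bg ;; fm (bang Bg) (mK Bg);
  m_eps : forall A B : C, mm Bg A B ;; eps Bg (A ⊗ B) = eps Bg A ⊗m eps Bg B;
  mK_eps : mK Bg ;; eps Bg unitK = idm unitK;
  dup_nat : forall (A B : C) (f : hom A B),
      fm (bang Bg) f ;; dup Bg B = dup Bg A ;; (fm (bang Bg) f ⊗m fm (bang Bg) f);
  er_nat : forall (A B : C) (f : hom A B), fm (bang Bg) f ;; er Bg B = er Bg A;
  dup_coassoc : forall A : C,
      dup Bg A ;; (dup Bg A ⊗m idm _) ;; alpha _ _ _ = dup Bg A ;; (idm _ ⊗m dup Bg A);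
  dup_counit_l : forall A : C, dup Bg A ;; (er Bg A ⊗m idm _) ;; lam _ = idm _;
  dup_counit_r : forall A : C, dup Bg A ;; (idm _ ⊗m er Bg A) ;; rho _ = idm _;
  dup_cocomm : forall A : C, dup Bg A ;; sig _ _ = dup Bg A;
  del_dup : forall A : C, del Bg A ;; dup Bg (fo (bang Bg) A) = dup Bg A ;; (del Bg A ⊗m del Bg A);
  del_er : forall A : C, del Bg A ;; er Bg (fo (bang Bg) A) = er Bg A;
  m_dup : forall A B : C,
      mm Bg A B ;; dup Bg (A ⊗ B)
      = (dup Bg A ⊗m dup Bg B) ;; tau _ _ _ _ ;; (mm Bg A B ⊗m mm Bg A B);
  m_er : forall A B : C, mm Bg A B ;; er Bg (A ⊗ B) = (er Bg A ⊗m er Bg B) ;; lam unitK;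
  mK_dup : mK Bg ;; dup Bg unitK = lami unitK ;; (mK Bg ⊗m mK Bg);
  mK_er : mK Bg ;; er Bg unitK = idm unitK;
  dup_coalg : forall A : C,
      del Bg A ;; fm (bang Bg) (dup Bg A)
      = dup Bg A ;; (del Bg A ⊗m del Bg A) ;; mm Bg _ _;
  er_coalg : forall A : C, del Bg A ;; fm (bang Bg) (er Bg A) = er Bg A ;; mK Bg
}.

Section Algebras.
Context {C : Cat} {M : MonData C} (T : CMonad C M) (Bg : MCM C M).

Local Notation "'T0' A" := (fo (cT T) A) (at level 10).
Local Notation "'T1' f" := (fm (cT T) f) (at level 10).
Local Notation "'B0' A" := (fo (bang Bg) A) (at level 10).
Local Notation "'B1' f" := (fm (bang Bg) f) (at level 10).

Definition is_alg (A : C) (nu : hom (T0 A) A) : Prop :=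
  ceta T A ;; nu = idm A /\ T1 nu ;; nu = cmu T A ;; nu.
Arguments is_alg {A} nu.

Definition Alg (A : C) : Type := { nu : hom (T0 A) A | is_alg nu }.

Definition alg_mor (A B : C) (nu : hom (T0 A) A) (nu' : hom (T0 B) B) (f : hom A B) : Prop :=
  T1 f ;; nu' = nu ;; f.
Arguments alg_mor {A B} nu nu' f.

Definition is_coalg (A : C) (om : hom A (B0 A)) : Prop :=
  om ;; eps Bg A = idm A /\ om ;; del Bg A = om ;; B1 om.
Arguments is_coalg {A} om.

Definition Coalg (A : C) : Type := { om : hom A (B0 A) | is_coalg om }.

Definition coalg_mor (A B : C) (om : hom A (B0 A)) (om' : hom B (B0 B)) (f : hom A B) : Prop :=
  f ;; om' = om ;; B1 f.
Arguments coalg_mor {A B} om om' f.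

Record DistLaw : Type := MkDistLaw {
  dl : forall A : C, hom (T0 (B0 A)) (B0 (T0 A));
  dl_nat : forall (A B : C) (f : hom A B), T1 (B1 f) ;; dl B = dl A ;; B1 (T1 f);
  dl_mu : forall A : C, cmu T (B0 A) ;; dl A = T1 (dl A) ;; dl (T0 A) ;; B1 (cmu T A);
  dl_eta : forall A : C, ceta T (B0 A) ;; dl A = B1 (ceta T A);
  dl_del : forall A : C, T1 (del Bg A) ;; dl (B0 A) ;; B1 (dl A) = dl A ;; del Bg (T0 A);
  dl_eps : forall A : C, dl A ;; eps Bg (T0 A) = T1 (eps Bg A);
  dl_m : forall A B : C,
      cn T (B0 A) (B0 B) ;; (dl A ⊗m dl B) ;; mm Bg (T0 A) (T0 B)
      = T1 (mm Bg A B) ;; dl (A ⊗ B) ;; B1 (cn T A B);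
  dl_mK : cnK T ;; mK Bg = T1 (mK Bg) ;; dl unitK ;; B1 (cnK T)
}.

(* A lifting is a functor !~ on X^T with U^T !~ = ! U^T, i.e. it sends an
   algebra (A,nu) to an algebra (!A, bl nu) and an algebra morphism f to !f
   (which must therefore be an algebra morphism), whose structure maps are
   delta_A, eps_A, Delta_A, e_A, m_{A,B}, m_K (which must therefore be algebra
   morphisms for the lifted / tensor (otimes^n) / unit (K,n_K) algebras).
   The monoidal coalgebra modality axioms of !~ are equations between
   morphisms of X^T, i.e. between their underlying morphisms in X, where they
   are exactly the axioms of (!,...) (U^T is faithful); so no further data
   or conditions are involved. *)
Record BangLifting : Type := MkBangLifting {
  bl : forall {A : C}, Alg A -> Alg (B0 A);
  bl_fun : forall (A B : C) (a : Alg A) (b : Alg B) (f : hom A B),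
      alg_mor (proj1_sig a) (proj1_sig b) f ->
      alg_mor (proj1_sig (bl a)) (proj1_sig (bl b)) (B1 f);
  bl_del : forall (A : C) (a : Alg A),
      alg_mor (proj1_sig (bl a)) (proj1_sig (bl (bl a))) (del Bg A);
  bl_eps : forall (A : C) (a : Alg A),
      alg_mor (proj1_sig (bl a)) (proj1_sig a) (eps Bg A);
  bl_dup : forall (A : C) (a : Alg A),
      alg_mor (proj1_sig (bl a))
              (cn T (B0 A) (B0 A) ;; (proj1_sig (bl a) ⊗m proj1_sig (bl a))) (dup Bg A);
  bl_er : forall (A : C) (a : Alg A),
      alg_mor (proj1_sig (bl a)) (cnK T) (er Bg A);
  (* c is the tensor algebra (A,nu) ⊗^n (B,nu') *)
  bl_m : forall (A B : C) (a : Alg A) (b : Alg B) (c : Alg (A ⊗ B)),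
      proj1_sig c = cn T A B ;; (proj1_sig a ⊗m proj1_sig b) ->
      alg_mor (cn T (B0 A) (B0 B) ;; (proj1_sig (bl a) ⊗m proj1_sig (bl b)))
              (proj1_sig (bl c)) (mm Bg A B);
  (* c is the unit algebra (K, n_K) *)
  bl_mK : forall c : Alg unitK, proj1_sig c = cnK T ->
      alg_mor (cnK T) (proj1_sig (bl c)) (mK Bg)
}.

(* A functor T~ on X^! with U^! T~ = T U^!, sending (A,om) to (TA, tl om) and
   f to Tf, whose structure maps are mu_A, eta_A, n_{A,B}, n_K (which must be
   coalgebra morphisms for the lifted / tensor (otimes^m) / unit (K,m_K)
   coalgebras).  The symmetric comonoidal monad axioms for T~ are equations
   in X^!, i.e. those of T in X (U^! is faithful). *)
Record TLifting : Type := MkTLifting {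
  tl : forall {A : C}, Coalg A -> Coalg (T0 A);
  tl_fun : forall (A B : C) (a : Coalg A) (b : Coalg B) (f : hom A B),
      coalg_mor (proj1_sig a) (proj1_sig b) f ->
      coalg_mor (proj1_sig (tl a)) (proj1_sig (tl b)) (T1 f);
  tl_mu : forall (A : C) (a : Coalg A),
      coalg_mor (proj1_sig (tl (tl a))) (proj1_sig (tl a)) (cmu T A);
  tl_eta : forall (A : C) (a : Coalg A),
      coalg_mor (proj1_sig a) (proj1_sig (tl a)) (ceta T A);
  (* c is the tensor coalgebra (A,om) ⊗^m (B,om') *)
  tl_n : forall (A B : C) (a : Coalg A) (b : Coalg B) (c : Coalg (A ⊗ B)),
      proj1_sig c = (proj1_sig a ⊗m proj1_sig b) ;; mm Bg A B ->
      coalg_mor (proj1_sig (tl c))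
                ((proj1_sig (tl a) ⊗m proj1_sig (tl b)) ;; mm Bg (T0 A) (T0 B)) (cn T A B);
  (* c is the unit coalgebra (K, m_K) *)
  tl_nK : forall c : Coalg unitK, proj1_sig c = mK Bg ->
      coalg_mor (proj1_sig (tl c)) (mK Bg) (cnK T)
}.

End Algebras.

Definition in_bijection (X Y : Type) : Prop :=
  exists (f : X -> Y) (g : Y -> X), (forall x, g (f x) = x) /\ (forall y, f (g y) = y).

(* Main.v *)
Require Import Defs.
From Stdlib Require Import FunctionalExtensionality ProofIrrelevance.

Lemma tail_eq {C : Cat} {X Y : C} (L R : hom X Y) : L = R -> forall Z (x : hom Y Z), L;;x = R;;x.
Proof. intros ->; reflexivity. Qed.
Ltac norm := repeat rewrite comp_assoc.


Ltac inst H1 := try unfold coalg_mor, alg_mor in H1; repeat match type of H1 with forall _, _ => let H' := fresh in epose proof (H1 _) as H'; clear H1; rename H' into H1 end.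
Ltac rwh H1 := repeat rewrite comp_assoc in H1; norm;
  first [ rewrite H1; clear H1
        | let H2 := fresh in epose proof (tail_eq _ _ H1 _ _) as H2;
          repeat rewrite comp_assoc in H2; rewrite H2; clear H1 H2 ].
Ltac rwa_ H := let H1 := fresh in epose proof H as H1; inst H1; rwh H1.
Ltac rwb_ H := let H1 := fresh in epose proof H as H1; inst H1; symmetry in H1; rwh H1.

Tactic Notation "rwa" open_constr(H) := rwa_ H.
Tactic Notation "rwb" open_constr(H) := rwb_ H.


Ltac show := match goal with |- ?g => idtac g end.
Section Coh.
Context {C : Cat} {M : MonData C} {HC : IsCat C} {HM : IsSMC C M}.

Lemma idl {A B : C} (f : hom A B) : idm A ;; f = f. Proof. apply comp_id_l. Qed.
Lemma idr {A B : C} (f : hom A B) : f ;; idm B = f. Proof. apply comp_id_r. Qed.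

Lemma tc {A1 A2 A3 B1 B2 B3 : C} (f : hom A1 A2) (f' : hom A2 A3) (g : hom B1 B2) (g' : hom B2 B3) :
  f ⊗m g ;; f' ⊗m g' = (f;;f') ⊗m (g;;g').
Proof. symmetry; apply tenm_comp. Qed.

Lemma tsplit1 {A A' B B' : C} (f : hom A A') (g : hom B B') : f ⊗m g = (f ⊗m idm B) ;; (idm A' ⊗m g).
Proof. rewrite tc, idl, idr. reflexivity. Qed.
Lemma tsplit2 {A A' B B' : C} (f : hom A A') (g : hom B B') : f ⊗m g = (idm A ⊗m g) ;; (f ⊗m idm B').
Proof. rewrite tc, idl, idr. reflexivity. Qed.

Lemma lam_faith {A B : C} (f g : hom A B) : idm unitK ⊗m f = idm unitK ⊗m g -> f = g.
Proof.
  intro H. rewrite <- (idl f), <- (idl g), <- (lam_iso2 A), !comp_assoc, <- !lam_nat, H. reflexivity.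
Qed.
Lemma rho_faith {A B : C} (f g : hom A B) : f ⊗m idm unitK = g ⊗m idm unitK -> f = g.
Proof.
  intro H. rewrite <- (idl f), <- (idl g), <- (rho_iso2 A), !comp_assoc, <- !rho_nat, H. reflexivity.
Qed.

Lemma tidl {X A B D : C} (f : hom A B) (g : hom B D) : idm X ⊗m (f;;g) = (idm X ⊗m f);;(idm X ⊗m g).
Proof. rewrite tc, idl. reflexivity. Qed.
Lemma tidr {X A B D : C} (f : hom A B) (g : hom B D) : (f;;g) ⊗m idm X = (f ⊗m idm X);;(g ⊗m idm X).
Proof. rewrite tc, idl. reflexivity. Qed.
Lemma cancel_l {X Y Z : C} (i : hom X Y) (j : hom Y X) (f g : hom Y Z) :
  j ;; i = idm Y -> i ;; f = i ;; g -> f = g.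
Proof. intros Hji H. rewrite <- (idl f), <- (idl g), <- Hji, !comp_assoc, H. reflexivity. Qed.
Lemma cancel_r {X Y Z : C} (i : hom Y Z) (j : hom Z Y) (f g : hom X Y) :
  i ;; j = idm Y -> f ;; i = g ;; i -> f = g.
Proof. intros Hij H. rewrite <- (idr f), <- (idr g), <- Hij, <- !comp_assoc, H. reflexivity. Qed.

Lemma kelly1 (A B : C) : alpha unitK A B ;; lam (A ⊗ B) = lam A ⊗m idm B.
Proof.
  apply lam_faith.
  apply (cancel_l ((alpha unitK unitK A ⊗m idm B) ;; alpha unitK (unitK ⊗ A) B)
                  (alphai unitK (unitK ⊗ A) B ;; (alphai unitK unitK A ⊗m idm B))).
  { norm. rwa @tc. rewrite alpha_iso2, idl, tenm_id, idl, alpha_iso2. reflexivity. }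
  rewrite tidl. norm. rwa pentagon. rwa triangle.
  rwb alpha_nat. rwa tc. rewrite triangle, idl. rewrite <- (tenm_id A B), <- alpha_nat. reflexivity.
Qed.

Lemma lam_KX (X : C) : lam (unitK ⊗ X) = idm unitK ⊗m lam X.
Proof.
  apply (cancel_r (lam X) (lami X)). apply lam_iso1.
  rewrite lam_nat. reflexivity.
Qed.

Lemma lam_rho_K : lam unitK = rho unitK.
Proof.
  apply rho_faith. rewrite <- kelly1, lam_KX, triangle. reflexivity.
Qed.

Lemma sig_unit (A : C) : sig A unitK ;; lam A = rho A.
Proof.
  apply rho_faith.
  apply (cancel_r (sig A unitK) (sig unitK A)). apply sig_inv.
  rewrite tidr. rewrite <- kelly1. norm. rwb lam_nat. rwb hexagon. rwa kelly1.
  rwb (sig_nat A A). rwa triangle. reflexivity.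
Qed.

Lemma sig_KK : sig unitK unitK = idm _.
Proof.
  apply (cancel_r (lam unitK) (lami unitK)). apply lam_iso1.
  rewrite sig_unit, idl, lam_rho_K. reflexivity.
Qed.


Lemma alphai_nat (A A' B B' D D' : C) (f : hom A A') (g : hom B B') (h : hom D D') :
  (f ⊗m (g ⊗m h)) ;; alphai A' B' D' = alphai A B D ;; ((f ⊗m g) ⊗m h).
Proof.
  symmetry. rewrite <- (idr (alphai A B D ;; ((f ⊗m g) ⊗m h))), <- (alpha_iso1 A' B' D').
  norm. rwa alpha_nat. rewrite <- comp_assoc, alpha_iso2, idl. reflexivity.
Qed.

Lemma slide {A A' B B' D D' : C} (f : hom A A') (X : hom B D) (Y : hom D D') (Y' : hom B B') (X' : hom B' D') :
  X ;; Y = Y' ;; X' -> (f ⊗m X) ;; (idm A' ⊗m Y) = (idm A ⊗m Y') ;; (f ⊗m X').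
Proof. intro H. rewrite !tc, idl, idr, H. reflexivity. Qed.

Lemma tau_nat (A A' B B' D D' E E' : C) (f : hom A A') (g : hom B B') (h : hom D D') (k : hom E E') :
  tau A B D E ;; ((f ⊗m h) ⊗m (g ⊗m k)) = ((f ⊗m g) ⊗m (h ⊗m k)) ;; tau A' B' D' E'.
Proof.
  unfold tau. norm. rwa alpha_nat.
  rwa (slide f _ _ _ _ (alphai_nat _ _ _ _ _ _ g h k)).
  assert (H2 : (g ⊗m h) ⊗m k ;; sig B' D' ⊗m idm E' = sig B D ⊗m idm E ;; (h ⊗m g) ⊗m k).
  { rewrite !tc, sig_nat, idl, idr. reflexivity. }
  rwa (slide f _ _ _ _ H2).
  rwa (slide f _ _ _ _ (alpha_nat _ _ _ _ _ _ h g k)).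
  rwa alphai_nat. reflexivity.
Qed.

Lemma tau_KK (X Y : C) : tau X unitK unitK Y = idm _.
Proof.
  unfold tau. rewrite sig_KK, !tenm_id, idr. norm. rwb tidl. rewrite alpha_iso2, tenm_id, idl, alpha_iso1. reflexivity.
Qed.

End Coh.
Ltac rwbd H := let H1 := fresh in epose proof H as H1; inst H1; symmetry in H1; repeat rewrite comp_assoc in H1; norm;
   let H2 := fresh in epose proof (tail_eq _ _ H1 _ _) as H2; let t := type of H2 in idtac t;
          repeat rewrite comp_assoc in H2; let t := type of H2 in idtac t; rewrite H2.
Tactic Notation "rwbd" open_constr(H) := rwbd H.


Section Main.
Context {C : Cat} {M : MonData C} {HC : IsCat C} {HM : IsSMC C M}
  {T : CMonad C M} {HT : IsSymComonoidalMonad C M T} {Bg : MCM C M} {HB : IsMCM C M Bg}.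

Local Notation T0 := (fo (cT T)).
Local Notation T1 := (fm (cT T)).
Local Notation B0 := (fo (bang Bg)).
Local Notation B1 := (fm (bang Bg)).

Lemma Tid (A : C) : T1 (idm A) = idm (T0 A). Proof. exact (proj1 scm_functor A). Qed.
Lemma Tc {A B D : C} (f : hom A B) (g : hom B D) : T1 (f;;g) = T1 f ;; T1 g.
Proof. exact (proj2 scm_functor _ _ _ f g). Qed.
Lemma Bid (A : C) : B1 (idm A) = idm (B0 A). Proof. exact (proj1 mcm_functor A). Qed.
Lemma Bc {A B D : C} (f : hom A B) (g : hom B D) : B1 (f;;g) = B1 f ;; B1 g.
Proof. exact (proj2 mcm_functor _ _ _ f g). Qed.

Section DL2TL.
Variable L : DistLaw T Bg.
Local Notation lam := (dl T Bg L).

Definition tl_om {A : C} (om : hom A (B0 A)) : hom (T0 A) (B0 (T0 A)) := T1 om ;; lam A.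

Lemma tl_is_coalg (A : C) (om : hom A (B0 A)) : is_coalg Bg A om -> is_coalg Bg (T0 A) (tl_om om).
Proof.
  intros [H1 H2]. unfold tl_om. split.
  - norm. rewrite dl_eps, <- Tc, H1, Tid. reflexivity.
  - norm. rwb (dl_del _ _ L). rwb Tc. rewrite H2. rewrite Tc. norm. rwa (dl_nat _ _ L).
    rewrite (Bc (T1 om)). reflexivity.
Qed.

Definition tl_of (A : C) (a : Coalg Bg A) : Coalg Bg (T0 A) :=
  exist _ (tl_om (proj1_sig a)) (tl_is_coalg A _ (proj2_sig a)).

Definition TL_of_DL : TLifting T Bg.
Proof.
  refine (MkTLifting T Bg tl_of _ _ _ _ _); unfold coalg_mor; simpl; unfold tl_om.
  - intros A B [a Ha] [b Hb] f Hf; simpl in *. unfold coalg_mor in Hf.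
    rwb Tc. rewrite Hf, Tc. norm. rwa (dl_nat _ _ L). reflexivity.
  - intros A [a Ha]; simpl. rwb (mu_nat). rwa (dl_mu _ _ L). rewrite !Tc. norm. reflexivity.
  - intros A [a Ha]; simpl. rwb (eta_nat). rwa (dl_eta _ _ L). reflexivity.
  - intros A B [a Ha] [b Hb] [c Hc] E; simpl in *. subst c.
    rewrite Tc. norm. rwb (dl_m _ _ L). rwa n_nat. rwa tc. reflexivity.
  - intros [c Hc] E; simpl in *. subst c. rewrite (dl_mK _ _ L). reflexivity.
Defined.
End DL2TL.

Lemma coalg_self {A : C} (a : Coalg Bg A) : coalg_mor Bg A (B0 A) (proj1_sig a) (del Bg A) (proj1_sig a).
Proof. destruct a as [om [H1 H2]]. exact H2. Qed.
Lemma coalg_counit {A : C} (a : Coalg Bg A) : proj1_sig a ;; eps Bg A = idm A.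
Proof. destruct a as [om [H1 H2]]. exact H1. Qed.

Definition cofree (A : C) : Coalg Bg (B0 A).
Proof. exists (del Bg A). split. apply del_eps_l. apply del_coassoc. Defined.

Lemma cofree_om (A : C) : proj1_sig (cofree A) = del Bg A. Proof. reflexivity. Qed.

Lemma cofree_mor {A B : C} (f : hom A B) : coalg_mor Bg (B0 A) (B0 B) (del Bg A) (del Bg B) (B1 f).
Proof. apply del_nat. Qed.
Lemma del_mor (A : C) : coalg_mor Bg (B0 A) (B0 (B0 A)) (del Bg A) (del Bg (B0 A)) (del Bg A).
Proof. unfold coalg_mor. apply del_coassoc. Qed.

Definition cten (A B : C) : Coalg Bg (B0 A ⊗ B0 B).
Proof.
  exists ((del Bg A ⊗m del Bg B) ;; mm Bg _ _). split.
  - norm. rewrite m_eps, tc, !del_eps_l, tenm_id. reflexivity.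
  - norm. rewrite m_del. rewrite Bc. rewrite <- (comp_assoc _ _ _ _ (mm Bg _ _)), <- (m_nat (B0 A) _ (B0 B) _ (del Bg A) (del Bg B)). norm. rwa tc. rwa tc. rewrite !del_coassoc. reflexivity.
Defined.
Lemma m_mor (A B : C) : coalg_mor Bg _ _ (proj1_sig (cten A B)) (del Bg (A ⊗ B)) (mm Bg A B).
Proof. unfold coalg_mor; simpl. rewrite m_del. reflexivity. Qed.

Definition cunit : Coalg Bg unitK.
Proof. exists (mK Bg). split. apply mK_eps. apply mK_del. Defined.
Lemma mK_mor : coalg_mor Bg _ _ (mK Bg) (del Bg unitK) (mK Bg).
Proof. unfold coalg_mor. apply mK_del. Qed.

Section TL2DL.
Variable TL : TLifting T Bg.
Local Notation W A := (proj1_sig (tl T Bg TL (cofree A))).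

Definition lam_of (A : C) : hom (T0 (B0 A)) (B0 (T0 A)) := W A ;; B1 (T1 (eps Bg A)).

Definition DL_of_TL : DistLaw T Bg.
Proof.
  refine (MkDistLaw T Bg lam_of _ _ _ _ _ _ _); unfold lam_of.
  - intros A B f. rwa (tl_fun _ _ TL _ _ (cofree A) (cofree B) _ (cofree_mor f)).
    norm. rewrite <- !Bc, <- !Tc, eps_nat. reflexivity.
  - intros A. rwa (tl_mu _ _ TL _ (cofree A)).
    rewrite Tc. norm.
    rwa (tl_fun _ _ TL _ _ (cofree _) (cofree _) _ (cofree_mor (T1 (eps Bg A)))).
    rwa (tl_fun _ _ TL _ _ (tl T Bg TL (cofree A)) (cofree _) _ (coalg_self (tl T Bg TL (cofree A)))).
    rewrite <- !Bc. f_equal. f_equal. norm. rwb mu_nat. repeat rwb Tc. norm. rewrite eps_nat.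
    rwa coalg_counit. rewrite idl. reflexivity.
  - intros A. rwa (tl_eta _ _ TL _ (cofree A)). rewrite cofree_om, <- Bc, <- eta_nat, Bc. rwa del_eps_r. apply idl.
  - intros A. rwa (tl_fun _ _ TL _ _ (cofree A) (cofree _) _ (del_mor A)).
    rewrite <- !Bc. rwb Tc. rewrite del_eps_l, Tid, idl.
    rewrite del_nat. rwa (coalg_self (tl T Bg TL (cofree A))). rewrite Bc. reflexivity.
  - intros A. norm. rewrite eps_nat. rwa coalg_counit. apply idl.
  - intros A B. rewrite tenm_comp. rwa m_nat.
    rwa (tl_n _ _ TL _ _ (cofree A) (cofree B) (cten A B) eq_refl).
    rwa (tl_fun _ _ TL _ _ (cten A B) (cofree _) _ (m_mor A B)).
    rewrite <- !Bc. f_equal. rwb Tc. rewrite m_eps. rewrite n_nat. reflexivity.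
  - rwa (tl_nK _ _ TL cunit eq_refl).
    rwa (tl_fun _ _ TL _ _ cunit (cofree _) _ mK_mor).
    rewrite <- !Bc. rwb Tc. rewrite mK_eps, Tid, idl. reflexivity.
Defined.
End TL2DL.

Lemma sig_ext {X : Type} {P : X -> Prop} (p q : {x | P x}) : proj1_sig p = proj1_sig q -> p = q.
Proof. destruct p, q; simpl; intro; subst; f_equal; apply proof_irrelevance. Qed.

Lemma DL_ext (L1 L2 : DistLaw T Bg) : (forall A, dl T Bg L1 A = dl T Bg L2 A) -> L1 = L2.
Proof.
  destruct L1 as [d1], L2 as [d2]; simpl; intro H.
  assert (d1 = d2) by (apply functional_extensionality_dep; auto). subst.
  f_equal; apply proof_irrelevance.
Qed.

Lemma TL_ext (t1 t2 : TLifting T Bg) :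
  (forall A (a : Coalg Bg A), proj1_sig (tl T Bg t1 a) = proj1_sig (tl T Bg t2 a)) -> t1 = t2.
Proof.
  destruct t1 as [t1], t2 as [t2]; simpl; intro H.
  assert (t1 = t2).
  { apply functional_extensionality_dep; intro A. apply functional_extensionality; intro a. apply sig_ext, H. }
  subst. f_equal; apply proof_irrelevance.
Qed.

Lemma bij13 : in_bijection (DistLaw T Bg) (TLifting T Bg).
Proof.
  exists TL_of_DL, DL_of_TL. split.
  - intro L. apply DL_ext. intro A. simpl. unfold lam_of. simpl. unfold tl_om.
    rwb (dl_nat _ _ L). rwb Tc. rewrite del_eps_r, Tid, idl. reflexivity.
  - intro t. apply TL_ext. intros A a. simpl. unfold tl_om, lam_of. simpl. unfold tl_om, lam_of. pose proof (tl_fun _ _ t _ _ a (cofree A) _ (coalg_self a)) as HH. unfold coalg_mor in HH. rewrite <- comp_assoc, HH.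
    rwb Bc. rwb Tc. rewrite coalg_counit, Tid, Bid, idr. reflexivity.
Qed.

Lemma dupE (Y : C) : dup Bg Y = del Bg Y ;; dup Bg (B0 Y) ;; (eps Bg (B0 Y) ⊗m eps Bg (B0 Y)).
Proof. rewrite del_dup. norm. rewrite tc, del_eps_l, tenm_id, idr. reflexivity. Qed.

Section CoalgComonoid.
Variables (X : C) (om : hom X (B0 X)) (Hom : is_coalg Bg X om).

Lemma om_eps : om ;; eps Bg X = idm X. Proof. apply (proj1 Hom). Qed.
Lemma om_del : om ;; del Bg X = om ;; B1 om. Proof. apply (proj2 Hom). Qed.

Lemma cdup : om ;; dup Bg X = om ;; dup Bg X ;; ((eps Bg X ;; om) ⊗m (eps Bg X ;; om)).
Proof.
  transitivity (om ;; (del Bg X ;; dup Bg (B0 X) ;; (eps Bg (B0 X) ⊗m eps Bg (B0 X)))).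
  { f_equal. apply dupE. }
  rwa om_del. rwa dup_nat. rwa tc. rewrite !eps_nat. reflexivity.
Qed.

Lemma cdup_split {Y1 Y2 : C} (h1 : hom (B0 X) Y1) (h2 : hom (B0 X) Y2) :
  om ;; (dup Bg X ;; (h1 ⊗m h2)) = om ;; (dup Bg X ;; ((eps Bg X ;; (om ;; h1)) ⊗m (eps Bg X ;; (om ;; h2)))).
Proof.
  rewrite <- (comp_assoc _ _ _ _ om (dup Bg X) (h1 ⊗m h2)), cdup. norm. rwa tc. norm. reflexivity.
Qed.

Lemma cdup_counit_r :
  om ;; dup Bg X ;; (eps Bg X ⊗m eps Bg X) ;; (idm X ⊗m (om ;; er Bg X)) ;; rho X = idm X.
Proof.
  transitivity (om ;; dup Bg X ;; (eps Bg X ⊗m er Bg X) ;; rho X).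
  - norm. rwa tc. rewrite idr. rwa (cdup_split (eps Bg X) (er Bg X)). rewrite om_eps, idr. reflexivity.
  - norm. rewrite tsplit2. norm. rwa (rho_nat). rwa dup_counit_r. rewrite idl. apply om_eps.
Qed.

Lemma cdup_counit_l :
  om ;; dup Bg X ;; (eps Bg X ⊗m eps Bg X) ;; ((om ;; er Bg X) ⊗m idm X) ;; lam X = idm X.
Proof.
  transitivity (om ;; dup Bg X ;; (er Bg X ⊗m eps Bg X) ;; lam X).
  - norm. rwa tc. rewrite idr. rwa (cdup_split (er Bg X) (eps Bg X)). rewrite om_eps, idr. reflexivity.
  - norm. rewrite tsplit1. norm. rwa (lam_nat). rwa dup_counit_l. rewrite idl. apply om_eps.
Qed.
End CoalgComonoid.

Section DLcomon.
Variable L : DistLaw T Bg.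
Local Notation lmb := (dl T Bg L).

Lemma nK_eq : cnK T = T1 (mK Bg) ;; lmb unitK ;; er Bg (T0 unitK).
Proof.
  rewrite <- (er_nat _ _ (cnK T)). rwb (dl_mK _ _ L). rewrite mK_er, idr. reflexivity.
Qed.

Lemma u_eq (A : C) : T1 (del Bg A) ;; lmb (B0 A) ;; er Bg (T0 (B0 A)) = T1 (er Bg A) ;; cnK T.
Proof.
  rewrite nK_eq. rwb Tc. rewrite <- er_coalg, Tc. rwa (dl_nat _ _ L). rewrite er_nat. reflexivity.
Qed.

Lemma dl_er' (A : C) : lmb A ;; er Bg (T0 A) = T1 (er Bg A) ;; cnK T.
Proof.
  rewrite <- u_eq. rewrite <- (er_nat _ _ (lmb A)). rwa (dl_del _ _ L). rewrite del_er. reflexivity.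
Qed.

Lemma n_natr {A B B' : C} (h : hom B B') : cn T A B ;; (idm (T0 A) ⊗m T1 h) = T1 (idm A ⊗m h) ;; cn T A B'.
Proof. rewrite n_nat, Tid. reflexivity. Qed.
Lemma n_natl {A A' B : C} (h : hom A A') : cn T A B ;; (T1 h ⊗m idm (T0 B)) = T1 (h ⊗m idm B) ;; cn T A' B.
Proof. rewrite n_nat, Tid. reflexivity. Qed.

Section DLdup.
Variable A : C.
Local Notation X := (T0 (B0 A)).
Definition omA : hom X (B0 X) := T1 (del Bg A) ;; lmb (B0 A).
Lemma omA_coalg : is_coalg Bg X omA.
Proof. exact (tl_is_coalg L (B0 A) (del Bg A) (proj2_sig (cofree A))). Qed.
Definition DA : hom X (X ⊗ X) := omA ;; dup Bg X ;; (eps Bg X ⊗m eps Bg X).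
Definition gA : hom X (X ⊗ X) := T1 (dup Bg A) ;; cn T (B0 A) (B0 A).

Lemma step0 : lmb A ;; dup Bg (T0 A) = DA ;; (lmb A ⊗m lmb A).
Proof.
  unfold DA. rewrite (dupE (T0 A)). rwb (dl_del _ _ L). rwa dup_nat. rwa tc. rewrite !eps_nat.
  rwa tc. unfold omA. norm. reflexivity.
Qed.

Lemma gp1 : gA ;; ((idm X ⊗m (omA ;; er Bg X)) ;; rho X) = idm X.
Proof.
  unfold gA, omA. rewrite u_eq. rewrite tidl. norm. rwa n_natr. rwa n_unit_r.
  rwb Tc. rwb Tc. rwa dup_counit_r. apply Tid.
Qed.

Lemma gp2 : gA ;; (((omA ;; er Bg X) ⊗m idm X) ;; lam X) = idm X.
Proof.
  unfold gA, omA. rewrite u_eq. rewrite tidr. norm. rwa n_natl. rwa n_unit_l.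
  rwb Tc. rwb Tc. rwa dup_counit_l. apply Tid.
Qed.

Lemma gcoalg : gA ;; ((omA ⊗m omA) ;; mm Bg X X) = omA ;; B1 gA.
Proof.
  unfold gA, omA. rewrite tenm_comp. rwb n_nat. rwa (dl_m _ _ L).
  rwb Tc. rwb Tc. rewrite <- dup_coalg. rewrite Tc. rwa (dl_nat _ _ L). rewrite Bc. reflexivity.
Qed.

Lemma step5 : DA ;; (gA ⊗m gA) = gA ;; ((DA ⊗m DA) ;; tau X X X X).
Proof.
  unfold DA. rwa tc. rewrite <- !(eps_nat _ _ gA). rwb tc. rwb dup_nat. rwb gcoalg.
  rwa m_dup. rwa tc. rewrite !m_eps. rwa tau_nat. rwa tc. rwa tc. norm. reflexivity.
Qed.

Lemma DA_gA : DA = gA.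
Proof.
  transitivity (DA ;; ((gA ;; ((idm X ⊗m (omA ;; er Bg X)) ;; rho X)) ⊗m (gA ;; (((omA ;; er Bg X) ⊗m idm X) ;; lam X)))).
  { rewrite gp1, gp2, tenm_id, idr. reflexivity. }
  rewrite tenm_comp. rewrite <- comp_assoc, step5. rewrite tenm_comp. norm.
  rwa (tau_nat _ _ _ _ _ _ _ _ (idm X) (omA ;; er Bg X) (omA ;; er Bg X) (idm X)).
  rewrite tau_KK, idl. rwa tc. rwa tc. unfold DA. norm.
  pose proof (cdup_counit_r _ _ omA_coalg) as H1. pose proof (cdup_counit_l _ _ omA_coalg) as H2.
  rwa H1. rwa H2. rewrite tenm_id, idr. reflexivity.
Qed.
End DLdup.

Lemma dl_dup' (A : C) : lmb A ;; dup Bg (T0 A) = T1 (dup Bg A) ;; cn T (B0 A) (B0 A) ;; (lmb A ⊗m lmb A).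
Proof. rewrite step0, DA_gA. reflexivity. Qed.
End DLcomon.

Section DL2BL.
Variable L : DistLaw T Bg.
Local Notation lmb := (dl T Bg L).

Lemma alg_unit {A : C} (a : Alg T A) : ceta T A ;; proj1_sig a = idm A.
Proof. destruct a as [nu [H1 H2]]. exact H1. Qed.
Lemma alg_self {A : C} (a : Alg T A) : alg_mor T _ A (cmu T A) (proj1_sig a) (proj1_sig a).
Proof. destruct a as [nu [H1 H2]]. exact H2. Qed.

Lemma bl_is_alg (A : C) (nu : hom (T0 A) A) : is_alg T A nu -> is_alg T (B0 A) (lmb A ;; B1 nu).
Proof.
  intros [H1 H2]. split.
  - rwa (dl_eta _ _ L). rewrite <- Bc, H1, Bid. reflexivity.
  - rewrite Tc. rwa (dl_nat _ _ L). rwb Bc. rewrite H2, Bc. rwb (dl_mu _ _ L). reflexivity.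
Qed.

Definition bl_of (A : C) (a : Alg T A) : Alg T (B0 A) :=
  exist _ (lmb A ;; B1 (proj1_sig a)) (bl_is_alg A _ (proj2_sig a)).

Definition BL_of_DL : BangLifting T Bg.
Proof.
  refine (MkBangLifting T Bg bl_of _ _ _ _ _ _ _); unfold alg_mor; simpl.
  - intros A B [a Ha] [b Hb] f Hf; simpl in *. unfold alg_mor in Hf.
    rwa (dl_nat _ _ L). rwb Bc. rewrite Hf, Bc. reflexivity.
  - intros A [a Ha]; simpl. rwa del_nat. rwb (dl_del _ _ L). rewrite Bc. reflexivity.
  - intros A [a Ha]; simpl. rwa eps_nat. rwa (dl_eps _ _ L). reflexivity.
  - intros A [a Ha]; simpl. rwa dup_nat. rwa (dl_dup' L). rewrite tenm_comp. reflexivity.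
  - intros A [a Ha]; simpl. rwa er_nat. rewrite (dl_er' L). reflexivity.
  - intros A B [a Ha] [b Hb] [c Hc] E; simpl in *. subst c.
    rewrite tenm_comp. norm. rewrite m_nat. rwa (dl_m _ _ L). rewrite Bc. reflexivity.
  - intros [c Hc] E; simpl in *. subst c. rewrite (dl_mK _ _ L). norm. reflexivity.
Defined.
End DL2BL.

Definition freeA (A : C) : Alg T (T0 A).
Proof. exists (cmu T A). split. apply mu_eta_l. apply mu_assoc. Defined.
Lemma freeA_nu (A : C) : proj1_sig (freeA A) = cmu T A. Proof. reflexivity. Qed.
Lemma free_mor {A B : C} (f : hom A B) : alg_mor T _ _ (proj1_sig (freeA A)) (proj1_sig (freeA B)) (T1 f).
Proof. apply mu_nat. Qed.
Lemma mu_mor (A : C) : alg_mor T _ _ (proj1_sig (freeA (T0 A))) (proj1_sig (freeA A)) (cmu T A).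
Proof. unfold alg_mor. apply mu_assoc. Qed.
Lemma self_mor {A : C} (a : Alg T A) : alg_mor T _ _ (proj1_sig (freeA A)) (proj1_sig a) (proj1_sig a).
Proof. apply (alg_self a). Qed.

Definition tenA (A B : C) : Alg T (T0 A ⊗ T0 B).
Proof.
  exists (cn T (T0 A) (T0 B) ;; (cmu T A ⊗m cmu T B)). split.
  - rwa eta_n. rewrite tc, !mu_eta_l, tenm_id. reflexivity.
  - rewrite Tc. norm. rwa n_nat. rwa tc. rewrite !mu_assoc. rewrite tenm_comp. norm.
    rwb mu_n. reflexivity.
Defined.
Lemma n_mor (A B : C) : alg_mor T _ _ (proj1_sig (freeA (A ⊗ B))) (proj1_sig (tenA A B)) (cn T A B).
Proof. unfold alg_mor; simpl. rewrite mu_n. norm. reflexivity. Qed.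

Definition unA : Alg T unitK.
Proof. exists (cnK T). split. apply eta_nK. symmetry. apply mu_nK. Defined.
Lemma nK_mor : alg_mor T _ _ (proj1_sig (freeA unitK)) (cnK T) (cnK T).
Proof. unfold alg_mor; simpl. symmetry. apply mu_nK. Qed.

Section BL2DL.
Variable BL : BangLifting T Bg.
Local Notation F A := (proj1_sig (bl T Bg BL (freeA A))).

Definition lamB (A : C) : hom (T0 (B0 A)) (B0 (T0 A)) := T1 (B1 (ceta T A)) ;; F A.

Definition DL_of_BL : DistLaw T Bg.
Proof.
  refine (MkDistLaw T Bg lamB _ _ _ _ _ _ _); unfold lamB.
  - intros A B f. rwb Tc. rwb Bc. rewrite eta_nat, Bc, Tc. norm.
    rwa (bl_fun _ _ BL _ _ (freeA A) (freeA B) _ (free_mor f)). reflexivity.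
  - intros A. rwb mu_nat. rwb (alg_self (bl T Bg BL (freeA A))).
    rewrite Tc. norm. rwb (bl_fun _ _ BL _ _ (freeA (T0 A)) (freeA A) _ (mu_mor A)).
    rwb (Tc (B1 (ceta T (T0 A))) (B1 (cmu T A))). rwb Bc. rewrite mu_eta_l, Bid, Tid, idl. reflexivity.
  - intros A. rwb eta_nat. rwa (alg_unit (bl T Bg BL (freeA A))). apply idr.
  - intros A. rwb (bl_del _ _ BL _ (freeA A)).
    rwb (Tc (B1 (ceta T A)) (del Bg (T0 A))). rewrite del_nat, (Tc (del Bg A)).
    rewrite (Bc (T1 (B1 (ceta T A)))).
    rwb (bl_fun _ _ BL _ _ (freeA (B0 A)) (freeA (B0 (T0 A))) _ (free_mor (B1 (ceta T A)))).
    rwb (bl_fun _ _ BL _ _ (freeA (B0 (T0 A))) (bl T Bg BL (freeA A)) _ (self_mor (bl T Bg BL (freeA A)))).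
    rwb (Tc (B1 (T1 (B1 (ceta T A)))) (B1 (F A))). rwb (Tc (B1 (ceta T (B0 A)))).
    rwb Bc. rwb Bc. rwb (eta_nat). rwa (alg_unit (bl T Bg BL (freeA A))). rewrite idr. reflexivity.
  - intros A. rwb (bl_eps _ _ BL _ (freeA A)). rwb (Tc (B1 (ceta T A)) (eps Bg _)).
    rewrite eps_nat, Tc, freeA_nu. rwa mu_eta_r. apply idr.
  - intros A B. rwb (bl_fun _ _ BL _ _ (freeA (A ⊗ B)) (tenA A B) _ (n_mor A B)).
    rwb (Tc (B1 (ceta T (A ⊗ B))) (B1 (cn T A B))). rewrite <- Bc, eta_n.
    rwb (Tc (mm Bg A B)). rewrite <- m_nat, Tc.
    rwa (bl_m _ _ BL _ _ (freeA A) (freeA B) (tenA A B) eq_refl).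
    rwa n_nat. rwa tc. reflexivity.
  - rwb (bl_fun _ _ BL _ _ (freeA unitK) unA _ nK_mor).
    rwb (Tc (B1 (ceta T unitK)) (B1 (cnK T))). rewrite <- Bc, eta_nK, Bid, Tid, idl.
    rewrite (bl_mK _ _ BL unA eq_refl). reflexivity.
Defined.
End BL2DL.

Lemma BL_ext (t1 t2 : BangLifting T Bg) :
  (forall A (a : Alg T A), proj1_sig (bl T Bg t1 a) = proj1_sig (bl T Bg t2 a)) -> t1 = t2.
Proof.
  destruct t1 as [t1], t2 as [t2]; simpl; intro H.
  assert (t1 = t2).
  { apply functional_extensionality_dep; intro A. apply functional_extensionality; intro a. apply sig_ext, H. }
  subst. f_equal; apply proof_irrelevance.
Qed.

Lemma bij12 : in_bijection (DistLaw T Bg) (BangLifting T Bg).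
Proof.
  exists BL_of_DL, DL_of_BL. split.
  - intro L. apply DL_ext. intro A. simpl. unfold lamB. simpl.
    rwa (dl_nat _ _ L). rwb Bc. rewrite mu_eta_r, Bid, idr. reflexivity.
  - intro t. apply BL_ext. intros A a. simpl. unfold lamB.
    rwb (bl_fun _ _ t _ _ (freeA A) a _ (self_mor a)).
    rwb Tc. rwb Bc. rewrite alg_unit, Bid, Tid, idl. reflexivity.
Qed.
End Main.

Theorem proposition6p7 (C : Cat) (M : MonData C) (HC : IsCat C) (HM : IsSMC C M)
    (T : CMonad C M) (HT : IsSymComonoidalMonad C M T)
    (Bg : MCM C M) (HB : IsMCM C M Bg) :
  in_bijection (DistLaw T Bg) (BangLifting T Bg) /\
  in_bijection (DistLaw T Bg) (TLifting T Bg).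
Proof. split; [apply bij12 | apply bij13]. Qed.
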